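(* Let $\alpha\in\mathbb{Q}$ and let $$f(x)=c_0+c_1(x-\alpha)^{e_1}+c_2(x-\alpha)^{e_2}+\cdots+c_t(x-\alpha)^{e_t}\in\mathbb{Q}[x],$$ where $c_0\in\mathbb{Q}$, $c_1,\dots,c_t\in\mathbb{Q}\setminus\{0\}$ and $0<e_1<e_2<\cdots<e_t$ are integers. Let $B_T\in\mathbb{N}$ with $t\le B_T$. Let $p$ be a prime such that: (i) $c_t\not\equiv 0 \pmod p$; (ii) for all $i\in\{1,2,\dots,t-1\}$, $e_t\not\equiv e_i \pmod{p-1}$; (iii) for all $i\in\{1,\dots,2B_T\}$, $e_t\not\equiv i\pmod{p-1}$. Then the degree of $f^{(p)}$ is greater than $2B_T$.
   Context: For a prime $p$ and $f\in\mathbb{Q}[x]$, $f^{(p)}\in\mathbb{Z}_p[x]$ denotes the unique polynomial of degree less than $p$ which is congruent to $f$ modulo $x^p-x$ and whose coefficients are reduced modulo $p$ (so $f^{(p)}(a)\equiv f(a)\bmod p$ for all $a\in\mathbb{Z}_p$). For a rational number $c$, ''$c\not\equiv 0\pmod p$'' means that the reduction of $c$ modulo $p$ is well-defined and nonzero. *)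

(* Defs.v *)
From HB Require Import structures.
From mathcomp Require Import all_boot all_order all_algebra.
Set Implicit Arguments. Unset Strict Implicit. Unset Printing Implicit Defensive.
Import Order.TTheory GRing.Theory Num.Theory.
Local Open Scope ring_scope.

Definition p_integral (p : nat) (q : rat) : bool := ~~ (p %| `|denq q|)%N.

(* Reduction mod p of a rational (meaningful when p_integral p q). *)
Definition red_rat (p : nat) (q : rat) : 'F_p :=
  (numq q)%:~R / ((denq q)%:~R).

Definition nonzero_mod (p : nat) (c : rat) : bool :=
  p_integral p c && ~~ (p %| `|numq c|)%N.

(* f^(p): reduce coefficients mod p, then take the remainder mod x^p - x,
   i.e. the unique polynomial of degree < p congruent to f mod x^p - x. *)
Definition poly_red (p : nat) (f : {poly rat}) : {poly 'F_p} :=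
  (map_poly (red_rat p) f) %% ('X^p - 'X).

(* Main.v *)
Require Import Defs.
From HB Require Import structures.
From mathcomp Require Import all_boot all_order all_algebra.
From mathcomp Require Import all_field.
From mathcomp Require Import ring zify.
Set Implicit Arguments. Unset Strict Implicit. Unset Printing Implicit Defensive.
Import Order.TTheory GRing.Theory Num.Theory.
Local Open Scope ring_scope.

Lemma den_dvd (q : rat) (n m : int) : q * n%:~R = m%:~R -> (denq q %| n)%Z.
Proof.
move=> H.
have E : numq q * n = m * denq q.
  apply: (@intr_inj rat); rewrite !rmorphM /= numqE -H; ring.
have cp : coprimez (denq q) (numq q).
  by rewrite coprimez_sym coprimezE coprime_num_den.
by rewrite -(Gauss_dvdzr _ cp) E dvdz_mull.
Qed.

Definition pint (p : nat) : {pred rat} := fun q => coprime `|denq q| p.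

Lemma pintE p q : (q \in pint p) = coprime `|denq q| p.
Proof. by []. Qed.

Lemma pint_frac p (q : rat) (n m : int) : coprime `|n| p ->
  q * n%:~R = m%:~R -> q \in pint p.
Proof.
move=> cn H; rewrite pintE; apply: coprime_dvdl cn.
by have := den_dvd H.
Qed.

Lemma pint_subring p : subring_closed (pint p).
Proof.
split.
- by rewrite pintE /= coprime1n.
- move=> x y; rewrite !pintE => hx hy.
  apply: (@pint_frac p _ (denq x * denq y) (numq x * denq y - numq y * denq x)).
    by rewrite abszM coprimeMl hx hy.
  rewrite rmorphM rmorphB !rmorphM /= !numqE; ring.
- move=> x y; rewrite !pintE => hx hy.
  apply: (@pint_frac p _ (denq x * denq y) (numq x * numq y)).
    by rewrite abszM coprimeMl hx hy.
  rewrite rmorphM !rmorphM /= !numqE; ring.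
Qed.

HB.instance Definition _ p := GRing.isSubringClosed.Build rat (pint p) (pint_subring p).

Record zp (p : nat) := ZP { zval :> rat; zvalP : zval \in pint p }.
HB.instance Definition _ p := [isSub for @zval p].
HB.instance Definition _ p := [Choice of zp p by <:].
HB.instance Definition _ p := [SubChoice_isSubComNzRing of zp p by <:].


Definition redz p (pP : prime p) (x : zp p) : 'F_p := red_rat p (val x).

Section Red.
Variables (p : nat) (pP : prime p).

Lemma Fp0 (z : int) : ((z%:~R : 'F_p) == 0) = (p %| z)%Z.
Proof. by rewrite (dvdz_pcharf (pchar_Fp pP)). Qed.

Lemma red_frac (q : rat) (n d : int) : (d%:~R : 'F_p) != 0 ->
  q * d%:~R = n%:~R -> red_rat p q = n%:~R / d%:~R.
Proof.
move=> dn0 H.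
have E : numq q * d = n * denq q.
  apply: (@intr_inj rat); rewrite !rmorphM /= numqE -H; ring.
have E' : (numq q)%:~R * d%:~R = n%:~R * (denq q)%:~R :> 'F_p.
  by rewrite -!intrM E.
have Dn0 : (denq q)%:~R != 0 :> 'F_p.
  apply/negP => /eqP D0; move: E'; rewrite D0 mulr0 => /eqP.
  rewrite mulf_eq0 (negbTE dn0) orbF => N0.
  move: D0 => /eqP; rewrite Fp0 => pd; move: N0; rewrite Fp0 => pn.
  have := coprime_num_den q; rewrite /coprime.
  have pn' : (p %| `|numq q|)%N := pn. have pd' : (p %| `|denq q|)%N := pd.
  have : (p %| gcdn `|numq q| `|denq q|)%N by rewrite dvdn_gcd pn' pd'.
  by move=> + /eqP g1; rewrite g1 dvdn1 => /eqP p1; move: pP; rewrite p1.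
rewrite /red_rat; apply/eqP; rewrite eqr_div //; apply/eqP; rewrite E'; ring.
Qed.

Lemma red_int (z : int) : red_rat p z%:~R = z%:~R.
Proof. by rewrite (@red_frac _ z 1) ?divr1 ?mulr1 // oner_neq0. Qed.

Lemma red_pintE (x : rat) : x \in pint p -> ((denq x)%:~R : 'F_p) != 0.
Proof.
rewrite /pint /= => cp; rewrite Fp0 dvdzE /=.
by rewrite -prime_coprime // coprime_sym.
Qed.


Lemma redz_zmod : zmod_morphism (redz pP).
Proof.
move=> x y; rewrite /redz /=.
have hx := red_pintE (valP x); have hy := red_pintE (valP y).
rewrite (@red_frac (val x) (numq (val x)) (denq (val x))) ?numqE //.
rewrite (@red_frac (val y) (numq (val y)) (denq (val y))) ?numqE //.
rewrite (@red_frac _ (numq (val x) * denq (val y) - numq (val y) * denq (val x)) (denq (val x) * denq (val y))).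
- rewrite !intrM intrB !intrM; field; by apply/andP.
- by rewrite intrM mulf_neq0.
- rewrite !rmorphB !rmorphM /= !numqE; ring.
Qed.

Lemma redz_monoid : monoid_morphism (redz pP).
Proof.
split.
  by rewrite /redz /= (@red_int 1).
move=> x y; rewrite /redz /=.
have hx := red_pintE (valP x); have hy := red_pintE (valP y).
rewrite (@red_frac (val x) (numq (val x)) (denq (val x))) ?numqE //.
rewrite (@red_frac (val y) (numq (val y)) (denq (val y))) ?numqE //.
rewrite (@red_frac _ (numq (val x) * numq (val y)) (denq (val x) * denq (val y))).
- rewrite !intrM; field; by apply/andP.
- by rewrite intrM mulf_neq0.
- rewrite !rmorphM /= !numqE; ring.
Qed.

HB.instance Definition _ := GRing.isZmodMorphism.Build (zp p) 'F_p (redz pP) redz_zmod.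
HB.instance Definition _ := GRing.isMonoidMorphism.Build (zp p) 'F_p (redz pP) redz_monoid.
End Red.


Definition rr (p j : nat) : nat := if j == 0%N then 0%N else ((j.-1) %% p.-1).+1.

Section Fp.
Variables (p : nat) (pP : prime p).
Local Notation m := ('X^p - 'X : {poly 'F_p}).

Lemma p_gt1 : (1 < p)%N. Proof. exact: prime_gt1. Qed.

Lemma size_m : size m = p.+1.
Proof.
have p1 := p_gt1.
rewrite size_addl; rewrite ?size_opp ?size_polyX ?size_polyXn //; lia.
Qed.

Lemma Xn_mod j : 'X^j %% m = 'X^(rr p j).
Proof.
have p1 := p_gt1.
have [n] := ubnP j; elim: n j => // n IH j hj.
case: (ltnP j p) => hjp.
  have -> : rr p j = j.
    rewrite /rr; case: eqP => // /eqP j0.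
    rewrite modn_small; lia.
  by rewrite modp_small // size_polyXn size_m.
have E : 'X^j = 'X^(j - p.-1) + 'X^(j - p) * m :> {poly 'F_p}.
  rewrite mulrBr -exprD -exprSr.
  have -> : (j - p + p = j)%N by lia.
  have -> : ((j - p).+1 = j - p.-1)%N by lia.
  by rewrite addrC subrK.
rewrite E modpD modp_mull addr0 IH; last by lia.
congr ('X^ _); rewrite /rr.
have -> : (j - p.-1 == 0)%N = false by lia.
have -> : (j == 0)%N = false by lia.
have -> : (j.-1 = (j - p.-1).-1 + p.-1)%N by lia.
by rewrite modnDr.
Qed.

Lemma mod_sum (Q : {poly 'F_p}) :
  Q %% m = \sum_(j < size Q) Q`_j *: 'X^(rr p j).
Proof.
rewrite -{1}[Q]coefK poly_def.
elim/big_rec2: _ => [|j y1 y2 _ <-]; first by rewrite mod0p.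
by rewrite modpD modpZl Xn_mod.
Qed.

Lemma coef_mod (Q : {poly 'F_p}) k :
  (Q %% m)`_k = \sum_(j < size Q | rr p j == k) Q`_j.
Proof.
rewrite mod_sum coef_sum [RHS]big_mkcond /=; apply: eq_bigr => j _.
by rewrite coefZ coefXn; case: eqP => [->|]; rewrite ?eqxx ?mulr1 // => /eqP/negbTE; rewrite eq_sym => ->; rewrite mulr0.
Qed.

Lemma chP : p \in [pchar {poly 'F_p}].
Proof. by rewrite pchar_poly (pchar_Fp pP). Qed.

Lemma m_shift (u : 'F_p) : m \Po ('X + u%:P) = m.
Proof.
rewrite comp_polyB comp_polyX rmorphXn /= comp_polyX.
rewrite -(pFrobenius_autE chP) pFrobenius_autD_comm; last by rewrite /GRing.comm mulrC.
rewrite !pFrobenius_autE -rmorphXn /=.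
have -> : u ^+ p = u by rewrite -[X in u ^+ X](card_Fp pP) expf_card.
by rewrite opprD addrACA subrr addr0.
Qed.

Lemma mod_shift (A : {poly 'F_p}) (u : 'F_p) :
  (A \Po ('X + u%:P)) %% m = (A %% m) \Po ('X + u%:P).
Proof.
rewrite {1}(divp_eq A m) comp_polyD comp_polyM m_shift modp_addl_mul_small //.
rewrite size_comp_poly2 ?ltn_modp ?size_m //.
  by rewrite -size_poly_eq0 size_m.
by rewrite size_XaddC.
Qed.

End Fp.

Lemma comp_f (alpha c0 : rat) t (c : nat -> rat) (e : nat -> nat) (q : {poly rat}) :
 (c0%:P + \sum_(1 <= i < t.+1) c i *: ('X - alpha%:P) ^+ (e i)) \Po q =
 c0%:P + \sum_(1 <= i < t.+1) c i *: (q - alpha%:P) ^+ (e i).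
Proof.
rewrite comp_polyD comp_polyC linear_sum /=; congr (_ + _); apply: eq_bigr => i _.
by rewrite comp_polyZ rmorphXn /= comp_polyB comp_polyX comp_polyC.
Qed.

Lemma coef_f (c0 : rat) t (c : nat -> rat) (P : nat -> {poly rat}) k :
 (c0%:P + \sum_(1 <= i < t.+1) c i *: P i)`_k =
 c0 * (k == 0%N)%:R + \sum_(1 <= i < t.+1) c i * (P i)`_k.
Proof.
rewrite coefD coefC coef_sum; congr (_ + _).
  by case: eqP; rewrite ?mulr1 ?mulr0.
by apply: eq_bigr => i _; rewrite coefZ.
Qed.

Lemma pintP p (pP : prime p) q : p_integral p q = (q \in pint p).
Proof. by rewrite /p_integral pintE coprime_sym prime_coprime. Qed.

Definition liftp p (P : {poly rat}) : {poly zp p} := map_poly (insubd (0 : zp p)) P.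

Lemma coef_liftp p (P : {poly rat}) k : (forall k, P`_k \in pint p) -> val (liftp p P)`_k = P`_k.
Proof.
move=> H; rewrite /liftp coef_map_id0; last by apply: val_inj; rewrite val_insubd rpred0.
by rewrite val_insubd H.
Qed.

Lemma liftpK p (P : {poly rat}) : (forall k, P`_k \in pint p) -> map_poly val (liftp p P) = P.
Proof.
by move=> H; apply/polyP => k; rewrite coef_map /=; exact: coef_liftp.
Qed.

Lemma red_liftp p (pP : prime p) (P : {poly rat}) : (forall k, P`_k \in pint p) ->
  map_poly (red_rat p) P = map_poly (redz pP) (liftp p P).
Proof.
move=> H; apply/polyP => k; rewrite coef_map /= coef_map_id0.
  by rewrite /redz coef_liftp.
by rewrite /red_rat /= mul0r.
Qed.

Lemma fact_coprime p (pP : prime p) d : (d < p)%N -> ~~ (p %| d`!)%N.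
Proof.
elim: d => [|d IH] hd; first by rewrite fact0 dvdn1; apply/negP => /eqP p1; move: pP; rewrite p1.
rewrite factS Euclid_dvdM // negb_or IH ?andbT; last by lia.
by apply/negP => /dvdn_leq; lia.
Qed.

Lemma bin_coprime p (pP : prime p) d k : (d < p)%N -> (k <= d)%N -> ~~ (p %| 'C(d, k))%N.
Proof.
move=> hd hk; apply/negP => H; have := fact_coprime pP hd.
by rewrite -(bin_fact hk) dvdn_mulr.
Qed.

Lemma coef_XaddC1 (R : nzRingType) d k : (('X + 1 : {poly R}) ^+ d)`_k = ('C(d, k))%:R.
Proof.
rewrite exprD1n coef_sum.
case: (ltnP d k) => hk.
  rewrite bin_small // big1 // => i _; rewrite coefMn coefXn.
  have -> : (k == i) = false by apply/negbTE; have := ltn_ord i; lia.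
  by rewrite mul0rn.
have hk' : (k < d.+1)%N by lia.
rewrite (bigD1 (Ordinal hk')) //=.
rewrite coefMn coefXn eqxx big1 ?addr0 //.
move=> i /eqP hi; rewrite coefMn coefXn.
have -> : (k == i) = false by apply/negbTE; apply/eqP => E; apply: hi; apply: val_inj.
by rewrite mul0rn.
Qed.

Lemma coef_compZX (R : comNzRingType) (P : {poly R}) (a : R) k :
  (P \Po (a *: 'X))`_k = a ^+ k * P`_k.
Proof.
rewrite coef_comp_poly.
under eq_bigr do rewrite exprZn coefZ coefXn.
case: (ltnP k (size P)) => hk.
  rewrite (bigD1 (Ordinal hk)) //= eqxx mulr1 big1 ?addr0; first by rewrite mulrC.
  move=> i /eqP hi; have -> : (k == i) = false.
    by apply/negbTE/eqP => E; apply: hi; apply: val_inj.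
  by rewrite !mulr0.
rewrite nth_default // mulr0 big1 // => i _.
have -> : (k == i) = false by apply/negbTE; have := ltn_ord i; lia.
by rewrite !mulr0.
Qed.

Lemma pigeon (d t : nat) (h : nat -> nat) : (t < d)%N ->
  exists2 k, (1 <= k <= d)%N & forall i, (1 <= i <= t)%N -> h i != k.
Proof.
move=> td; pose S := map h (iota 1 t).
case: (boolP (all (fun k => k \in S) (iota 1 d))) => [/allP H|/allPn [k hk nk]].
  have := uniq_leq_size (iota_uniq 1 d) H.
  by rewrite size_map !size_iota; lia.
exists k; first by move: hk; rewrite mem_iota; lia.
move=> i hi; apply/eqP => E; move: nk; rewrite -E.
by rewrite map_f // mem_iota; lia.
Qed.

Lemma red_nz p (pP : prime p) q : nonzero_mod p q -> red_rat p q != 0.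
Proof.
case/andP; rewrite pintP // => hq hn.
rewrite /red_rat mulf_neq0 ?invr_eq0 ?red_pintE //.
by rewrite Fp0.
Qed.

Lemma rr_mod p j : (0 < j)%N -> (rr p j %% p.-1 = j %% p.-1)%N.
Proof.
move=> j0; rewrite /rr; have -> : (j == 0%N) = false by lia.
by rewrite -addn1 modnDml addn1 prednK.
Qed.

Unset Implicit Arguments.

Theorem mainTheorem1 (alpha c0 : rat) (t : nat) (c : nat -> rat) (e : nat -> nat)
    (BT p : nat) :
  (0 < t)%N ->
  (forall i, (1 <= i <= t)%N -> c i != 0) ->
  (0 < e 1)%N ->
  (forall i, (1 <= i < t)%N -> (e i < e i.+1)%N) ->
  (t <= BT)%N ->
  prime p ->
  let f : {poly rat} :=
    c0%:P + \sum_(1 <= i < t.+1) c i *: ('X - alpha%:P) ^+ (e i) in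
  (* f^(p) is defined: all coefficients of f are p-integral *)
  (forall k, p_integral p f`_k) ->
  nonzero_mod p (c t) ->
  (forall i, (1 <= i <= t.-1)%N -> e t != e i %[mod p.-1])%N ->
  (forall i, (1 <= i <= 2 * BT)%N -> e t != i %[mod p.-1])%N ->
  (2 * BT < (size (poly_red p f)).-1)%N.
Proof.
move=> t0 cnz e1 einc tBT pP f fint ctnz cii ciii.
have emono : forall i j, (1 <= i)%N -> (i < j)%N -> (j <= t)%N -> (e i < e j)%N.
  move=> i j hi; elim: j => // j IH hij hj.
  case: (ltngtP i j) => hij'.
  - apply: ltn_trans (IH hij' _) (einc j _); lia.
  - lia.
  - by rewrite -hij'; apply: einc; lia.
have epos : forall i, (1 <= i <= t)%N -> (0 < e i)%N.
  move=> i /andP [hi1 hit]; case: (ltngtP 1 i) => h.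
  - by apply: leq_trans e1 (ltnW (emono 1%N i _ h hit)).
  - lia.
  - by rewrite -h.
set N := e t.
have eltN : forall i, (1 <= i < t)%N -> (e i < N)%N.
  by move=> i /andP [h1 h2]; apply: emono.
have Npos : (0 < N)%N by apply: epos; lia.
have fintP : forall k, f`_k \in pint p by move=> k; rewrite -pintP.
have p3 : (2 < p)%N.
  have p2 := prime_gt1 pP.
  case: (ltngtP 2 p) => // h; first lia.
  have := ciii 1%N; rewrite -h /= !modn1 eqxx; lia.
set q := p.-1.
set d := rr p N.
have dE : d = (N.-1 %% q).+1 by rewrite /d /rr; have -> : (N == 0%N) = false by lia.
have dq : (0 < d <= q)%N by rewrite dE ltn_mod; lia.
have dBT : (2 * BT < d)%N.
  rewrite ltnNge; apply/negP => H.
  have := ciii d; rewrite -rr_mod // eqxx; lia.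
have rr_ne : forall i, (1 <= i < t)%N -> rr p (e i) != d.
  move=> i hi; apply/eqP => E.
  have := cii i; rewrite -(rr_mod p Npos) -(rr_mod p (epos i _)); last by lia.
  rewrite -/d E eqxx; lia.
pose m : {poly 'F_p} := 'X^p - 'X.
pose F' := liftp p f.
pose A := map_poly (redz pP) F'.
have hA : poly_red p f = A %% m by rewrite /poly_red red_liftp.
case: (boolP (alpha \in pint p)) => Ha.
-
  pose a : zp p := Sub alpha Ha.
  pose g : {poly rat} := c0%:P + \sum_(1 <= i < t.+1) c i *: 'X^(e i).
  have hg : f \Po ('X + alpha%:P) = g.
    rewrite comp_f /g; congr (_ + _); apply: eq_bigr => i _; by rewrite addrK.
  pose G' := F' \Po ('X + a%:P).
  have hG : map_poly val G' = g.
    rewrite /G' map_comp_poly liftpK // map_polyXaddC -hg; congr (_ \Po (_ + _%:P)); exact: SubK.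
  pose B := map_poly (redz pP) G'.
  have hB : B = A \Po ('X + (redz pP a)%:P).
    by rewrite /B /G' map_comp_poly map_polyXaddC.
  have hsize : size (poly_red p f) = size (B %% m).
    by rewrite hA hB /m (mod_shift pP) size_comp_poly2 // size_XaddC.
  have coefB : forall j, B`_j = red_rat p g`_j.
    by move=> j; rewrite /B coef_map /= /redz -hG coef_map.
  have gj : forall j, rr p j == d -> g`_j = if j == N then c t else 0.
    move=> j hj.
    have j0 : j != 0%N by apply/eqP => j0; move: hj; rewrite j0 /rr /=; lia.
    rewrite /g coef_f; case: (@eqP _ j 0%N) => [E|_]; first by move: j0; rewrite E.
    rewrite mulr0 add0r big_nat_recr /=; last by lia.
    rewrite big_nat_cond big1 ?add0r; last first.
      move=> i; rewrite andbT => hi; rewrite coefXn.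
      case: eqP => [E|]; last by rewrite mulr0.
      by move: (rr_ne i hi); rewrite -E hj.
    by rewrite coefXn -/N; case: eqP; rewrite ?mulr1 ?mulr0.
  have ctr := red_nz pP ctnz.
  have NB : (N < size B)%N.
    rewrite ltnNge; apply/negP => H.
    have := nth_default 0 H; rewrite coefB gj /rr; last by rewrite /d.
    by rewrite eqxx => /eqP; rewrite (negbTE ctr).
  have Bd : (B %% m)`_d != 0.
    rewrite /m (coef_mod pP) (bigD1 (Ordinal NB)) //= coefB gj // eqxx big1 ?addr0 //.
    move=> j /andP [hj hjN]; rewrite coefB gj //.
    have -> : (j == N :> nat) = false.
      by apply/negbTE; apply: contra hjN => /eqP E; apply/eqP; apply: val_inj.
    by rewrite /red_rat /= mul0r.
  have : (d < size (B %% m)%R)%N.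
    rewrite ltnNge; apply/negP => H; move: Bd; by rewrite nth_default.
  rewrite hsize; lia.
-
  exfalso.
  have pden : (p %| `|denq alpha|)%N.
    by move: Ha; rewrite pintE coprime_sym prime_coprime // negbK.
  have cpn : coprime `|numq alpha| p.
    apply: (coprime_dvdr pden); exact: coprime_num_den.
  have pnum : ~~ (p %| `|numq alpha|)%N by rewrite -prime_coprime // coprime_sym.
  have a0 : alpha != 0.
    apply/eqP => a0; move: pnum; by rewrite a0 /= dvdn0.
  pose beta := alpha^-1.
  have hb : beta * (numq alpha)%:~R = (denq alpha)%:~R.
    by rewrite numqE /beta mulrA mulVf // mul1r.
  have bint : beta \in pint p := pint_frac cpn hb.
  have bred : red_rat p beta = 0.
    rewrite (red_frac pP (n := denq alpha) (d := numq alpha)) //; last by rewrite Fp0.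
    have : ((denq alpha)%:~R : 'F_p) == 0 by rewrite Fp0.
    by move/eqP ->; rewrite mul0r.
  pose b : zp p := Sub beta bint.
  have redb : redz pP b = 0 by rewrite /redz /b SubK.
  have fcoef := coef_f c0 t c (fun i => ('X - alpha%:P) ^+ e i).
  have fN : f`_N = c t.
    rewrite fcoef; have -> : (N == 0%N) = false by lia.
    rewrite mulr0 add0r big_nat_recr /=; last by lia.
    rewrite big_nat_cond big1 ?add0r; last first.
      move=> i; rewrite andbT => hi; rewrite nth_default ?mulr0 //.
      by rewrite size_exp_XsubC; have := eltN i hi; lia.
    have := lead_coefE (('X - alpha%:P) ^+ N).
    by rewrite size_exp_XsubC /= lead_coef_exp lead_coefXsubC expr1n => <-; rewrite mulr1.
  have fbig : forall k, (N < k)%N -> f`_k = 0.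
    move=> k hk; rewrite fcoef; have -> : (k == 0%N) = false by lia.
    rewrite mulr0 add0r big_nat_cond big1 // => i; rewrite andbT => hi.
    rewrite nth_default ?mulr0 // size_exp_XsubC.
    have : (e i <= N)%N.
      case: (ltngtP i t) => h; first (apply: ltnW; apply: eltN; lia); [lia|by rewrite h].
    lia.
  pose F := beta ^+ N *: (f \Po (alpha *: 'X)).
  have Fcoef : forall k, (k <= N)%N -> F`_k = beta ^+ (N - k) * f`_k.
    move=> k hk; rewrite coefZ coef_compZX mulrA; congr (_ * _).
    rewrite -{1}(subnK hk) exprD -mulrA -exprMn /beta mulVf // expr1n mulr1 //.
  have Fbig : forall k, (N < k)%N -> F`_k = 0.
    by move=> k hk; rewrite coefZ coef_compZX fbig // !mulr0.
  have Fint : forall k, F`_k \in pint p.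
    move=> k; case: (leqP k N) => hk.
      by rewrite Fcoef // rpredM ?rpredX.
    by rewrite Fbig // rpred0.

  pose F'' := liftp p F.
  pose G' := F'' \Po ('X + 1).
  pose G := map_poly val G'.
  have hG : G = beta ^+ N *: (c0%:P + \sum_(1 <= i < t.+1) c i *: (alpha *: 'X) ^+ e i).
    rewrite /G /G' (_ : 'X + 1 = 'X + 1%:P); last by rewrite polyC1.
    rewrite map_comp_poly liftpK // map_polyXaddC rmorph1.
    rewrite /F comp_polyZ -comp_polyA comp_polyZ comp_polyX scalerDr alg_polyC.
    by rewrite /f comp_f addrK.
  have Gj : forall j, (0 < j)%N -> (forall i, (1 <= i <= t)%N -> e i != j) -> G`_j = 0.
    move=> j j0 hj; rewrite hG coefZ coef_f; have -> : (j == 0%N) = false by lia.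
    rewrite mulr0 add0r big_nat_cond big1 ?mulr0 // => i; rewrite andbT => hi.
    rewrite exprZn coefZ coefXn; have -> : (j == e i) = false.
      by apply/negbTE; rewrite eq_sym; apply: hj; lia.
    by rewrite !mulr0.
  pose r := red_rat p (c t).
  have hr : r != 0 := red_nz pP ctnz.
  have redF : map_poly (redz pP) F'' = r *: 'X^N.
    apply/polyP => k; rewrite coef_map /= coefZ coefXn.
    case: (ltngtP k N) => hk.
    - have -> : F''`_k = b ^+ (N - k) * (liftp p f)`_k.
        apply: val_inj; rewrite rmorphM rmorphXn /= coef_liftp //.
        by rewrite coef_liftp // Fcoef // ltnW.
      rewrite rmorphM rmorphXn /= redb expr0n.
      have -> : (N - k == 0)%N = false by lia.
      by rewrite mul0r mulr0.
    - have -> : F''`_k = 0 by apply: val_inj; rewrite coef_liftp // Fbig.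
      by rewrite rmorph0 mulr0.
    - by rewrite mulr1 /redz coef_liftp // hk Fcoef // subnn expr0 mul1r fN.
  have redG : map_poly (redz pP) G' %% m = r *: ('X + 1) ^+ d.
    rewrite /G' map_comp_poly rmorphD /= map_polyX rmorph1 redF.
    rewrite (_ : 'X + 1 = 'X + 1%:P); last by rewrite polyC1.
    rewrite /m (mod_shift pP) modpZl (Xn_mod pP) -/d.
    by rewrite comp_polyZ rmorphXn /= comp_polyX polyC1.
  have [k hk hki] := @pigeon d t (fun i => rr p (e i)) ltac:(lia).
  have := congr1 (fun P : {poly 'F_p} => P`_k) redG => /=.
  rewrite (coef_mod pP) coefZ coef_XaddC1 big1; last first.
    move=> j /eqP hj; rewrite coef_map /= /redz.
    have -> : val G'`_j = G`_j by rewrite /G coef_map.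
    rewrite Gj; first by rewrite /red_rat /= mul0r.
      move: hj hk; case: (nat_of_ord j) => [|//]; rewrite /rr /= => <-; lia.
    move=> i hi; apply/eqP => E; move: (hki i hi); by rewrite E hj eqxx.
  move/eqP; rewrite eq_sym mulf_eq0 (negbTE hr) /=.
  rewrite -(dvdn_pcharf (pchar_Fp pP)); apply/negP; apply: bin_coprime => //; lia.
Qed.
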